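(* Let $\phi$ be the standard Gaussian density, $h$ a probability density on $\mathbb R$ that is symmetric, positive and decreasing on $[0,\infty)$, $m\ge0$ and $c_0>0$. There exists $c>0$ depending only on $h,m,c_0$ such that for all $n\ge1$, $\sigma>0$ and real numbers $X$, $x\ge0$ with $|X|\le x$ and $\sigma\le c_0x$, $$\int_{\mathbb R}|\theta|^m\,\phi(\sqrt n(X-\theta))\,h(\theta/\sigma)\,d\theta\ \ge\ c\,\sigma^{m+1}\phi(\sqrt n\,x).$$ *)

(* Defs.v *)
From HB Require Import structures.
From mathcomp Require Import all_boot all_order all_algebra.
From mathcomp Require Import all_classical all_reals all_analysis.
Set Implicit Arguments. Unset Strict Implicit. Unset Printing Implicit Defensive.
Import Order.TTheory GRing.Theory Num.Theory.
Local Open Scope ring_scope.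

Definition gauss_density {R : realType} (t : R) : R :=
  expR (- (t ^+ 2) / 2) / Num.sqrt (2 * pi).

Definition sym_pos_decr_density {R : realType} (h : R -> R) : Prop :=
  [/\ measurable_fun [set: R] h,
      (\int[@lebesgue_measure R]_(x in [set: R]) (h x)%:E = 1)%E,
      (forall x, h (- x) = h x),
      (forall x, 0 < h x) &
      (forall s t, 0 <= s -> s <= t -> h t <= h s)].

(* Main.v *)
Require Import Defs.
From HB Require Import structures.
From mathcomp Require Import all_boot all_order all_algebra.
From mathcomp Require Import all_classical all_reals all_analysis.
From mathcomp Require Import ring lra.
Import Order.TTheory GRing.Theory Num.Theory.
Local Open Scope ring_scope.

Lemma lower_itv (R : realType) (f : R -> R) (a b C : R) :
  measurable_fun [set: R] f -> (forall t, 0 <= f t) -> a <= b ->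
  (forall t, a <= t <= b -> C <= f t) -> 0 <= C ->
  ((C * (b - a))%:E <= \int[@lebesgue_measure R]_(t in [set: R]) (f t)%:E)%E.
Proof.
move=> mf f0 ab fC C0.
have mI : measurable (`[a, b]%classic : set R) by exact: measurable_itv.
apply: (@le_trans _ _ (\int[@lebesgue_measure R]_(t in `[a, b]) (f t)%:E)%E); last first.
  apply: ge0_subset_integral => //.
  - by apply/measurable_realfun.measurable_EFinP.
  - by move=> t _; rewrite lee_fin.
apply: (@le_trans _ _ (\int[@lebesgue_measure R]_(t in `[a, b]) (cst C%:E) t)%E).
  rewrite integral_cst //.
  rewrite [X in (_ * X)%E](_ : _ = (b - a)%:E)%E; last first.
    apply: eq_trans (lebesgue_measure_itv `[a, b]) _ => /=.
    rewrite lte_fin; have [ab'|ba] := ltP a b; first by rewrite -EFinD.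
    have -> : b = a by apply/eqP; rewrite eq_le ab ba.
    by rewrite subrr.
  by rewrite EFinM.
apply: (@ge0_le_integral _ _ _ (@lebesgue_measure R)).
- exact: mI.
- by move=> t _; rewrite lee_fin.
- exact: measurable_cst.
- apply/measurable_realfun.measurable_EFinP.
  exact: (measurable_funS _ _ mf).
- by move=> t; rewrite /= in_itv /= => H; rewrite lee_fin fC.
Qed.

Lemma gauss_ge0 (R : realType) (t : R) : 0 <= gauss_density t.
Proof. by rewrite /gauss_density divr_ge0 // ltW // expR_gt0. Qed.

Lemma gauss_mono (R : realType) (u v : R) : `|u| <= `|v| ->
  gauss_density v <= gauss_density u.
Proof.
move=> uv; rewrite /gauss_density ler_wpM2r // ?invr_ge0 // ler_expR.
have : u ^+ 2 <= v ^+ 2.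
  rewrite -(real_normK (num_real u)) -(real_normK (num_real v)).
  by rewrite ler_sqr ?nnegrE.
lra.
Qed.

Lemma gauss_meas (R : realType) (a b : R) :
  measurable_fun [set: R] (fun t => gauss_density (a * (b - t))).
Proof.
rewrite /gauss_density.
apply: measurable_realfun.measurable_funM; last exact: measurable_cst.
apply: measurableT_comp; first exact: measurable_realfun.measurable_expR.
apply: measurable_realfun.measurable_funM; last exact: measurable_cst.
apply: measurable_realfun.measurable_funN.
apply: measurable_realfun.measurable_funX.
apply: measurable_realfun.measurable_funM; first exact: measurable_cst.
apply: measurable_realfun.measurable_funB; first exact: measurable_cst.
exact: measurable_id.
Qed.

Lemma integrand_meas (R : realType) (h : R -> R) (m a b s : R) :
  measurable_fun [set: R] h ->
  measurable_fun [set: R] (fun t => `|t| `^ m * gauss_density (a * (b - t)) * h (t / s)).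
Proof.
move=> hm.
apply: measurable_realfun.measurable_funM.
  apply: measurable_realfun.measurable_funM; last exact: gauss_meas.
  exact: (measurableT_comp (measurable_realfun.measurable_powR m)
     (@measurable_realfun.normr_measurable R setT)).
apply: measurableT_comp; first exact: hm.
apply: measurable_realfun.measurable_funM; first exact: measurable_id.
exact: measurable_cst.
Qed.

Theorem mainTheorem6 (R : realType) (h : R -> R) (m c0 : R) :
  sym_pos_decr_density h -> 0 <= m -> 0 < c0 ->
  exists c : R, 0 < c /\
    forall (n : nat) (sigma X x : R),
      (1 <= n)%N -> 0 < sigma -> 0 <= x -> `|X| <= x -> sigma <= c0 * x ->
      ((c * sigma `^ (m + 1) * gauss_density (Num.sqrt (n%:R) * x))%:E <=
       \int[@lebesgue_measure R]_(theta in [set: R])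
          (`|theta| `^ m * gauss_density (Num.sqrt (n%:R) * (X - theta))
             * h (theta / sigma))%:E)%E.
Proof.
move=> [hm _ hsym hpos hdec] m0 c00.
set k := Num.min 1 c0^-1.
have k0 : 0 < k by rewrite lt_min ltr01 invr_gt0.
have k1 : k <= 1 by rewrite ge_min lexx.
have kc : k <= c0^-1 by rewrite ge_min lexx orbT.
exists ((k / 2) `^ (m + 1) * h 1); split.
  by rewrite mulr_gt0 // powR_gt0 // divr_gt0.
move=> n s X x n1 s0 x0 Xx sx.
set d := s * k.
have d0 : 0 < d by rewrite mulr_gt0.
have ds : d <= s by rewrite /d ler_piMr // ltW.
have dx : d <= x.
  apply: (le_trans (y := s * c0^-1)); first by rewrite ler_wpM2l // ltW.
  by rewrite ler_pdivrMr // mulrC.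
set G := gauss_density (Num.sqrt n%:R * x).
set C := (d / 2) `^ m * G * h 1.
have C0 : 0 <= C.
  by rewrite /C mulr_ge0 // ?mulr_ge0 ?powR_ge0 ?gauss_ge0 // ltW.
have key : forall t, d / 2 <= `|t| <= d -> `|X - t| <= x ->
    C <= `|t| `^ m * gauss_density (Num.sqrt n%:R * (X - t)) * h (t / s).
  move=> t /andP[t1 t2] Xt.
  rewrite /C; apply: ler_pM.
  - by rewrite mulr_ge0 ?powR_ge0 ?gauss_ge0.
  - exact: ltW.
  - apply: ler_pM; rewrite ?powR_ge0 ?gauss_ge0 //.
      by apply: ge0_ler_powR => //; rewrite nnegrE // divr_ge0 // ltW.
    apply: gauss_mono.
    by rewrite !normrM ger0_norm ?sqrtr_ge0 // ler_wpM2l ?sqrtr_ge0 // (ger0_norm x0).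
  - have -> : h (t / s) = h `|t / s|.
      have [t0|t0] := leP 0 (t / s); first by rewrite ger0_norm.
      by rewrite ltr0_norm // hsym.
    apply: hdec => //.
    rewrite normrM normfV (gtr0_norm s0) ler_pdivrMr // mul1r.
    exact: le_trans t2 ds.
have eqL : (k / 2) `^ (m + 1) * h 1 * s `^ (m + 1) * G = C * (d / 2).
  have -> : (k / 2) `^ (m + 1) * h 1 * s `^ (m + 1) * G
           = ((k / 2) `^ (m + 1) * s `^ (m + 1)) * G * h 1 by rewrite /=; ring.
  rewrite -powRM ?ltW ?divr_gt0 //.
  have -> : k / 2 * s = d / 2 by rewrite /d; ring.
  rewrite powRD; last by apply/implyP => _; rewrite gt_eqF // divr_gt0.
  rewrite powRr1 ?divr_ge0 ?ltW // /C; ring.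
rewrite eqL.
have mf := @integrand_meas R h m (Num.sqrt n%:R) X s hm.
have f0 : forall t, 0 <= `|t| `^ m * gauss_density (Num.sqrt n%:R * (X - t)) * h (t / s).
  by move=> t; rewrite mulr_ge0 ?mulr_ge0 ?powR_ge0 ?gauss_ge0 // ltW.
have [X0|X0] := leP 0 X.
  have -> : d / 2 = d - d / 2 by field.
  apply: lower_itv => //; first lra.
  move=> t /andP[t1 t2]; apply: key.
    rewrite ger0_norm; last lra.
    by apply/andP; split => //; lra.
  rewrite ler_norml; rewrite ger0_norm // in Xx; apply/andP; split; lra.
have -> : d / 2 = - (d / 2) - - d by field.
apply: lower_itv => //; first lra.
move=> t /andP[t1 t2]; apply: key.
  rewrite ler0_norm; last lra.
  by apply/andP; split => //; lra.
rewrite ler_norml; rewrite ltr0_norm // in Xx; apply/andP; split; lra.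
Qed.
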